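(* Let $p,q\in\mathbb R$, $\tilde p=p-2p^2$. The fifth order differential equation \begin{align*} &x^5R^{(5)}+10x^4R^{(4)}+x^3(20x^2-20qx+22+10\tilde p)R'''+x^2(64x^2-76qx+4+44\tilde p)R''\\ &+4x\big(16x^4-32qx^3+4(4q^2+4\tilde p+1)x^2-q(6+16\tilde p)x+4\tilde p^2+7\tilde p-1\big)R'\\ &+8\big(-4qx^3+4(q^2+\tilde p)x^2-q(6\tilde p-1)x+2\tilde p^2\big)R=0 \end{align*} admits a unique formal solution of the form $R(x)=\frac1\pi+\frac1\pi\sum_{n\ge1}\pi^n g_nx^{-n}$, with $$g_1=-\frac{q}{2\pi},\ g_2=\frac{2\tilde p-q^2}{8\pi^2},\ g_3=-\frac{q(-1-2\tilde p+q^2)}{16\pi^3},\ g_4=\frac{-16\tilde p-4\tilde p^2+19q^2+12\tilde pq^2-5q^4}{128\pi^4},$$ and for $n\ge1$ \begin{align*} &64(n+4)\pi^4g_{n+4}-32q(4n+11)\pi^3g_{n+3}\\ &+4\big(32+54n+29n^2+5n^3+8\tilde p(2n+3)+24q^2+16nq^2\big)\pi^2g_{n+2}\\ &-4q\big(4\tilde p(1+4n)+n(4+11n+5n^2)\big)\pi g_{n+1}\\ &+(n-1)\big(16\tilde p^2+2\tilde pn(5n-2)+n^2(n^2+n-2)\big)g_n=0. \end{align*}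
   Context: This differential equation is satisfied by $R(x)=\frac1\pi\rho_{(1),\infty}(x/\pi;4,p,q)$, the rescaled bulk density at the spectrum singularity of the generalised circular Jacobi ensemble with $\beta=4$ (probability density on $(-\pi,\pi]^N$ proportional to $\prod_l e^{q\theta_l}|1+e^{i\theta_l}|^{4p}\prod_{j<k}|e^{i\theta_k}-e^{i\theta_j}|^4$, scaled density $\rho_{(1),\infty}(x)=\lim_{N\to\infty}\frac{2\pi}{N}\rho_{(1),N}(-\pi\,\mathrm{sgn}(x)+2\pi x/N)$). *)

(* Defs.v *)
From HB Require Import structures.
From mathcomp Require Import all_boot all_order all_algebra.
From mathcomp Require Import reals trigo.
Set Implicit Arguments. Unset Strict Implicit. Unset Printing Implicit Defensive.
Import Order.TTheory GRing.Theory Num.Theory.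
Local Open Scope ring_scope.

(* A formal series in powers of x with integer exponents:
   a k is the coefficient of x^k (k : int).  All operations below
   (differentiation, multiplication by a polynomial in x) are
   coefficientwise finite, so no convergence is involved. *)

Section FormalSeries.
Variable R : realType.

Definition fder (a : int -> R) : int -> R := fun k => (k + 1)%:~R * a (k + 1).

Definition fder_n (n : nat) (a : int -> R) : int -> R := iter n fder a.

Definition pmul (P : {poly R}) (a : int -> R) : int -> R :=
  fun k => \sum_(i < size P) P`_i * a (k - (i%:Z)).

Definition ptilde (p : R) : R := p - 2 * p ^+ 2.

Definition odeL (p q : R) (a : int -> R) : int -> R :=
  let pt := ptilde p in
  fun k =>
      pmul ('X^5) (fder_n 5 a) k
    + pmul (10%:P * 'X^4) (fder_n 4 a) k
    + pmul ('X^3 * (20%:P * 'X^2 - (20 * q)%:P * 'X + (22 + 10 * pt)%:P))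
           (fder_n 3 a) k
    + pmul ('X^2 * (64%:P * 'X^2 - (76 * q)%:P * 'X + (4 + 44 * pt)%:P))
           (fder_n 2 a) k
    + pmul (4%:P * 'X * (16%:P * 'X^4 - (32 * q)%:P * 'X^3
                         + (4 * (4 * q ^+ 2 + 4 * pt + 1))%:P * 'X^2
                         - (q * (6 + 16 * pt))%:P * 'X
                         + (4 * pt ^+ 2 + 7 * pt - 1)%:P))
           (fder_n 1 a) k
    + pmul (8%:P * (- (4 * q)%:P * 'X^3 + (4 * (q ^+ 2 + pt))%:P * 'X^2
                    - (q * (6 * pt - 1))%:P * 'X + (2 * pt ^+ 2)%:P))
           a k.

(* The formal series R(x) = (1/pi) * sum_(n>=0) pi^n g_n x^(-n)
   (with the normalization g_0 = 1 imposed separately). *)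
Definition ser_of (g : nat -> R) : int -> R :=
  fun k => if k <= 0 then pi^-1 * pi ^+ `|k|%N * g `|k|%N else 0.

End FormalSeries.

(* Main.v *)
Require Import Defs.
From HB Require Import structures.
From mathcomp Require Import all_boot all_order all_algebra.
From mathcomp Require Import reals trigo.
From mathcomp Require Import ring lra zify.
From Stdlib Require Import FunctionalExtensionality.
Import Order.TTheory GRing.Theory Num.Theory.
Local Open Scope ring_scope.
Section S.
Variable R : realType.

Lemma pmulE (P : {poly R}) a k n : (size P <= n)%N ->
  pmul P a k = \sum_(0 <= i < n) P`_i * a (k - i%:Z).
Proof.
move=> H; rewrite /pmul big_mkord.
rewrite (big_ord_widen n (fun i : nat => P`_i * a (k - i%:Z)) H) /=.
rewrite big_mkcond /=; apply: eq_bigr => i _; case: ifP => // /negbT.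
by rewrite -leqNgt => Hi; rewrite nth_default // mul0r.
Qed.

Lemma fder_nS n (a : int -> R) k : fder_n n.+1 a k = fder_n n (fder a) k.
Proof. by rewrite /fder_n iterSr. Qed.


Ltac canon a k := repeat match goal with |- context [a ?x] =>
  lazymatch x with
  | k => fail | (k - 1) => fail | (k - 2) => fail | (k - 3) => fail | (k - 4) => fail
  | _ => first [ rewrite (_ : x = k) ; [| lia] | rewrite (_ : x = k - 1); [|lia]
               | rewrite (_ : x = k - 2) ; [| lia] | rewrite (_ : x = k - 3); [|lia]
               | rewrite (_ : x = k - 4) ; [| lia] ]
  end end.

Lemma sizeE6 (P : {poly R}) : (forall j, P`_j.+4.+2 = 0) -> (size P <= 6)%N.
Proof. by move=> H; apply/leq_sizeP => -[|[|[|[|[|[|j]]]]]] // _. Qed.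

Lemma shift1 (x : int) (n : nat) : x - n.+1%:Z + 1 = x - n%:Z.
Proof. lia. Qed.
Lemma natzR (n : nat) : (n%:Z)%:~R = n%:R :> R. Proof. by []. Qed.

Definition C0 pt (k : int) : R := let kr : R := k%:~R in
  kr*(kr-1)*(kr-2)*(kr-3)*(kr-4) + 10 * kr*(kr-1)*(kr-2)*(kr-3) + (22+10*pt)* kr*(kr-1)*(kr-2)
  + (4+44*pt)*kr*(kr-1) + 4*(4*pt^+2+7*pt-1)*kr + 16*pt^+2.
Definition C1 q pt (k : int) : R := let kr : R := k%:~R in
  -20*q*(kr-1)*(kr-2)*(kr-3) - 76*q*(kr-1)*(kr-2) - 4*q*(6+16*pt)*(kr-1) - 8*q*(6*pt-1).
Definition C2 q pt (k : int) : R := let kr : R := k%:~R in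
  20*(kr-2)*(kr-3)*(kr-4) + 64*(kr-2)*(kr-3) + 16*(4*q^+2+4*pt+1)*(kr-2) + 32*(q^+2+pt).
Definition C3 q (k : int) : R := let kr : R := k%:~R in -128*q*(kr-3) - 32*q.
Definition C4 (k : int) : R := let kr : R := k%:~R in 64*(kr-4).

Lemma odeLE p q a k : let pt := ptilde p in
  odeL p q a k = C0 pt k * a k + C1 q pt k * a (k - 1%:Z) + C2 q pt k * a (k - 2%:Z)
     + C3 q k * a (k - 3%:Z) + C4 k * a (k - 4%:Z).
Proof.
move=> pt; rewrite /odeL -/pt.

rewrite !(pmulE _ _ _ 6); try by apply: sizeE6 => j; rewrite -?mulrA !coefE /= ?(mulr0, addr0, subr0, mul0r, oppr0).
rewrite /index_iota /= !big_cons !big_nil -?mulrA !coefE /= /fder_n /= /fder.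
rewrite !shift1 !subr0 /C0 /C1 /C2 /C3 /C4 !(intrD, intrB) !natzR.
ring.
Qed.



Lemma ser_eqn g z (n : nat) : z = - n%:Z -> ser_of g z = pi^-1 * pi^+n * g n :> R.
Proof. by move=> ->; rewrite /ser_of oppr_le0 abszN absz_nat. Qed.
Lemma ser_pos g z : 0 < z -> ser_of g z = 0 :> R.
Proof. by move=> h; rewrite /ser_of lt_geF. Qed.
Lemma ser_sub g (j s : nat) : ser_of g (j%:Z - s%:Z) =
  if (j <= s)%N then pi^-1 * pi^+(s - j) * g (s - j)%N else 0 :> R.
Proof. case: leqP => h; [apply: ser_eqn | apply: ser_pos]; lia. Qed.
Lemma ser_nat g (j : nat) : ser_of g j%:Z =
  if j == 0%N then pi^-1 * pi^+0 * g 0%N else 0 :> R.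
Proof. by case: j => [|j]; [apply: ser_eqn | apply: ser_pos]. Qed.
Lemma ser_negsub g (j s : nat) : ser_of g (Negz j - s%:Z) = pi^-1 * pi^+(j.+1 + s) * g (j.+1 + s)%N :> R.
Proof. apply: ser_eqn; rewrite NegzE; lia. Qed.
Lemma ser_negz g (j : nat) : ser_of g (Negz j) = pi^-1 * pi^+(j.+1) * g j.+1 :> R.
Proof. by apply: ser_eqn. Qed.
End S.

Section G.
Variable R : realType.
Variables q pt : R.

Definition nxt (n : nat) (g0 g1 g2 g3 : R) : R := let nr : R := n%:R in
  - (- 32 * q * (4 * nr + 11) * pi ^+ 3 * g3
     + 4 * (32 + 54 * nr + 29 * nr ^+ 2 + 5 * nr ^+ 3 + 8 * pt * (2 * nr + 3)
                  + 24 * q ^+ 2 + 16 * nr * q ^+ 2) * pi ^+ 2 * g2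
     - 4 * q * (4 * pt * (1 + 4 * nr) + nr * (4 + 11 * nr + 5 * nr ^+ 2)) * pi * g1
     + (nr - 1) * (16 * pt ^+ 2 + 2 * pt * nr * (5 * nr - 2)
                         + nr ^+ 2 * (nr ^+ 2 + nr - 2)) * g0)
  / (64 * (nr + 4) * pi ^+ 4).

Definition gv1 : R := - q / (2 * pi).
Definition gv2 : R := (2 * pt - q ^+ 2) / (8 * pi ^+ 2).
Definition gv3 : R := - (q * (-1 - 2 * pt + q ^+ 2)) / (16 * pi ^+ 3).
Definition gv4 : R := (- 16 * pt - 4 * pt ^+ 2 + 19 * q ^+ 2 + 12 * pt * q ^+ 2
                     - 5 * q ^+ 4) / (128 * pi ^+ 4).

Fixpoint GG (m : nat) : R * R * R * R :=
  match m with
  | 0%N => (gv1, gv2, gv3, gv4)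
  | m'.+1 => let: (a, b, c, d) := GG m' in (b, c, d, nxt m'.+1 a b c d)
  end.

Definition gseq (n : nat) : R := match n with 0%N => 1 | n'.+1 => (GG n').1.1.1 end.

Lemma GGS m : GG m.+1 = ((GG m).1.1.2, (GG m).1.2, (GG m).2,
   nxt m.+1 (GG m).1.1.1 (GG m).1.1.2 (GG m).1.2 (GG m).2).
Proof. by rewrite /=; case: (GG m) => [[[a b] c] d]. Qed.

Lemma gseq1 m : gseq m.+1 = (GG m).1.1.1. Proof. by []. Qed.
Lemma gseq2 m : gseq m.+2 = (GG m).1.1.2. Proof. by rewrite gseq1 GGS. Qed.
Lemma gseq3 m : gseq m.+3 = (GG m).1.2. Proof. by rewrite gseq2 GGS. Qed.
Lemma gseq4 m : gseq m.+4 = (GG m).2. Proof. by rewrite gseq3 GGS. Qed.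
Lemma gseq5 m : gseq m.+4.+1 = nxt m.+1 (gseq m.+1) (gseq m.+2) (gseq m.+3) (gseq m.+4).
Proof. by rewrite (gseq4 m.+1) GGS gseq4 gseq3 gseq2. Qed.

Lemma pi_neq0' : pi != 0 :> R. Proof. by rewrite gt_eqF // pi_gt0. Qed.

Lemma gseq_rec (n : nat) : (1 <= n)%N ->
  let nr : R := n%:R in
             64 * (nr + 4) * pi ^+ 4 * gseq (n + 4)%N
           - 32 * q * (4 * nr + 11) * pi ^+ 3 * gseq (n + 3)%N
           + 4 * (32 + 54 * nr + 29 * nr ^+ 2 + 5 * nr ^+ 3 + 8 * pt * (2 * nr + 3)
                  + 24 * q ^+ 2 + 16 * nr * q ^+ 2) * pi ^+ 2 * gseq (n + 2)%N
           - 4 * q * (4 * pt * (1 + 4 * nr) + nr * (4 + 11 * nr + 5 * nr ^+ 2))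
               * pi * gseq (n + 1)%N
           + (nr - 1) * (16 * pt ^+ 2 + 2 * pt * nr * (5 * nr - 2)
                         + nr ^+ 2 * (nr ^+ 2 + nr - 2)) * gseq n
           = 0.
Proof.
case: n => [//|m] _ nr.
rewrite !addnS !addn0 gseq5 /nxt -/nr.
have hpi := pi_neq0'.
have hn : nr + 4 != 0 by rewrite gt_eqF //; have := ler0n R m.+1; rewrite -/nr; lra.
clearbody nr; move: (pi : R) hpi => P hP.
field.
by rewrite ?(hn, hP).
Qed.

Lemma ser_eq (g g' : nat -> R) (n : nat) : (forall i, (i < n)%N -> g' i = g i) ->
  forall z, - n%:Z < z -> ser_of g' z = ser_of g z.
Proof.
move=> H z hz; rewrite /ser_of; case: ifP => // hz0; rewrite H //.
move: hz hz0; case: z => [z|z] /=; rewrite ?NegzE; lia.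
Qed.

End G.

Lemma ode_ex (R : realType) (p q : R) k : odeL p q (ser_of (gseq R q (ptilde p))) k = 0.
Proof.
have hpi := pi_neq0' R.
rewrite odeLE; set pt := ptilde p; set g := gseq R q pt.
case: k => j.
{ rewrite ser_nat !ser_sub.
  case: j => [|[|[|[|[|j]]]]] /=; last by rewrite !mulr0 !addr0.
  all: rewrite ?subSS ?subn0 ?subnn /C0 /C1 /C2 /C3 /C4 /gv1 /gv2 /gv3 /gv4 ?natzR.
  all: clearbody pt; move: (pi : R) hpi => P hP.
  all: field; by rewrite ?hP. }
rewrite ser_negz !ser_negsub /C0 /C1 /C2 /C3 /C4 NegzE intrN natzR !exprD.
have := gseq_rec R q pt j.+1 isT; cbv zeta.
move=> /(congr1 (fun x => - (pi^-1 * pi^+j.+1) * x)); rewrite mulr0 => <-.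
rewrite /g.
ring.
Qed.

Lemma ode_uniq (R : realType) (p q : R) (g' : nat -> R) : g' 0%N = 1 ->
  (forall k, odeL p q (ser_of g') k = 0) -> g' = gseq R q (ptilde p).
Proof.
move=> h0 hode; set g := gseq R q (ptilde p).
have hpi := pi_neq0' R.
suff H : forall n i, (i < n)%N -> g' i = g i.
  by apply: functional_extensionality => i; apply: (H i.+1).
elim=> [//|n IH] i; rewrite ltnS leq_eqVlt => /orP [/eqP -> | hi]; last exact: IH.
case: n IH => [_|m IH]; first by rewrite h0.
have [k hk] : exists k : int, k = 4%:Z - m.+1%:Z by eexists.
have E1 := hode k; have E2 := ode_ex R p q k.
rewrite !odeLE in E1 E2.
have e0 : ser_of g' k = ser_of g k by apply: (ser_eq _ _ _ _ IH); lia.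
have e1 : ser_of g' (k - 1%:Z) = ser_of g (k - 1%:Z) by apply: (ser_eq _ _ _ _ IH); lia.
have e2 : ser_of g' (k - 2%:Z) = ser_of g (k - 2%:Z) by apply: (ser_eq _ _ _ _ IH); lia.
have e3 : ser_of g' (k - 3%:Z) = ser_of g (k - 3%:Z) by apply: (ser_eq _ _ _ _ IH); lia.
have e4 : forall h : nat -> R, ser_of h (k - 4%:Z) = pi^-1 * pi^+m.+1 * h m.+1.
  by move=> h; apply: ser_eqn; lia.
rewrite e0 e1 e2 e3 e4 in E1; rewrite e4 in E2.
have E3 := congr2 (fun x y => x - y) E1 E2; rewrite /= subr0 in E3.
have E4 : C4 R k * (pi^-1 * pi^+m.+1) * (g' m.+1 - g m.+1) = 0.
  by apply: (etrans _ E3); ring.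
have hC : C4 R k != 0.
  rewrite /C4 hk intrB !natzR; apply: ltr0_neq0; have := ltr0Sn R m; lra.
have hF : C4 R k * (pi^-1 * pi^+m.+1) != 0.
  by rewrite mulf_neq0 // mulf_neq0 ?invr_eq0 // expf_neq0.
by move/eqP: E4; rewrite mulf_eq0 (negbTE hF) /= subr_eq0 => /eqP.
Qed.

Theorem proposition3p2 (R : realType) (p q : R) :
  let pt := ptilde p in
  exists g : nat -> R,
    [/\ g 0%N = 1,
        (forall k, odeL p q (ser_of g) k = 0),
        (forall g' : nat -> R, g' 0%N = 1 ->
           (forall k, odeL p q (ser_of g') k = 0) -> g' = g),
        [/\ g 1%N = - q / (2 * pi),
            g 2%N = (2 * pt - q ^+ 2) / (8 * pi ^+ 2),
            g 3%N = - (q * (-1 - 2 * pt + q ^+ 2)) / (16 * pi ^+ 3) &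
            g 4%N = (- 16 * pt - 4 * pt ^+ 2 + 19 * q ^+ 2 + 12 * pt * q ^+ 2
                     - 5 * q ^+ 4) / (128 * pi ^+ 4)] &
        (forall n : nat, (1 <= n)%N ->
           let nr : R := n%:R in
             64 * (nr + 4) * pi ^+ 4 * g (n + 4)%N
           - 32 * q * (4 * nr + 11) * pi ^+ 3 * g (n + 3)%N
           + 4 * (32 + 54 * nr + 29 * nr ^+ 2 + 5 * nr ^+ 3 + 8 * pt * (2 * nr + 3)
                  + 24 * q ^+ 2 + 16 * nr * q ^+ 2) * pi ^+ 2 * g (n + 2)%N
           - 4 * q * (4 * pt * (1 + 4 * nr) + nr * (4 + 11 * nr + 5 * nr ^+ 2))
               * pi * g (n + 1)%N
           + (nr - 1) * (16 * pt ^+ 2 + 2 * pt * nr * (5 * nr - 2)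
                         + nr ^+ 2 * (nr ^+ 2 + nr - 2)) * g n
           = 0)].
Proof.
move=> pt; exists (gseq R q pt); split.
- by [].
- exact: ode_ex.
- exact: ode_uniq.
- by split.
- exact: gseq_rec.
Qed.
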